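(* Let $\widehat{\boldsymbol f}=(\widehat f_1,\dots,\widehat f_{H-1},\widehat f_H=r_H)$ be functions $\mathcal S\times\mathcal A\to\mathbb R$ and let $\widehat\pi$ be the greedy policy induced by $\widehat{\boldsymbol f}$. For a policy $\pi$ define $$\Delta_h(\pi;s,a)=\sum_{h'=h}^{H-1}\big(\mathcal P^\pi_{h\to h'}(\mathcal T^\star_{h'}\widehat f_{h'+1}-\widehat f_{h'})\big)(s,a).$$ Then for every policy $\pi$, $$J(\pi)-J(\widehat\pi)\le\sum_{h=1}^{H-1}\mathbb E_{\widehat\pi}\big[\Delta_h(\pi;S_h,\pi_h(S_h))-\Delta_h(\pi;S_h,\widehat\pi_h(S_h))\big].$$
   Context: Finite-horizon MDP with horizon $H\ge2$, state space $\mathcal S$, action space $\mathcal A$, transition kernels $P_h(\cdot\mid s,a)$ ($h=1,\dots,H-1$), known reward functions $r_h$ ($h=1,\dots,H$), initial distribution $\nu_1$. A policy $\pi=(\pi_1,\dots,\pi_H)$ assigns distributions $\pi_h(\cdot\mid s)$ on $\mathcal A$; $J(\pi)=\mathbb E_{\nu_1,\pi}[\sum_{h=1}^H r_h(S_h,A_h)]$ with $S_1\sim\nu_1$, $A_h\sim\pi_h(\cdot\mid S_h)$, $S_{h+1}\sim P_h(\cdot\mid S_h,A_h)$; $\mathbb E_\pi$ is expectation over this process. For $f:\mathcal S\times\mathcal A\to\mathbb R$, $f(s,\pi_h(s)):=\int f(s,a)\pi_h(da\mid s)$. $(\mathcal P^\pi_h f)(s,a):=\int f(s',\pi_{h+1}(s'))P_h(ds'\mid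 s,a)$ and $\mathcal P^\pi_{h\to h'}=\mathcal P^\pi_h\cdots\mathcal P^\pi_{h'-1}$ for $h<h'$, identity for $h=h'$. $(\mathcal T^\star_h f)(s,a)=r_h(s,a)+\mathbb E[\max_{a'}f(S',a')]$, $S'\sim P_h(\cdot\mid s,a)$. The greedy policy of $\widehat{\boldsymbol f}$ satisfies $\widehat\pi_h(s)\in\arg\max_a\widehat f_h(s,a)$. All expectations are assumed finite. *)

(* Defs.v *)
From HB Require Import structures.
From mathcomp Require Import all_boot all_order all_algebra.
From mathcomp Require Import all_classical all_reals all_analysis.
Set Implicit Arguments. Unset Strict Implicit. Unset Printing Implicit Defensive.
Import Order.TTheory GRing.Theory Num.Theory.
Local Open Scope classical_set_scope.
Local Open Scope ring_scope.

Section MDP.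
Context (R : realType) (d1 d2 : measure_display)
        (S : measurableType d1) (A : measurableType d2).

Definition transitions := nat -> R.-pker (S * A)%type ~> S.
Definition policy := nat -> R.-pker S ~> A.

Variables (P : transitions) (nu : probability S R).

(* f(s, pi_h(s)) := \int f(s,a) pi_h(da | s), for a kernel rho = pi_h *)
Definition polE (rho : R.-pker S ~> A) (f : S -> A -> R) (s : S) : R :=
  Rintegral (rho s) setT (f s).

Definition Pop (pi : policy) (h : nat) (f : S -> A -> R) : S -> A -> R :=
  fun s a => Rintegral (P h (s, a)) setT (polE (pi h.+1) f).

Fixpoint PchainN (pi : policy) (h k : nat) (f : S -> A -> R) : S -> A -> R :=
  match k with
  | 0 => f
  | k'.+1 => Pop pi h (PchainN pi h.+1 k' f)
  end.

(* P^pi_{h -> h'} (identity when h' <= h; only used with h <= h') *)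
Definition Pto (pi : policy) (h h' : nat) (f : S -> A -> R) : S -> A -> R :=
  PchainN pi h (h' - h) f.

(* (T*_h f)(s,a) = r_h(s,a) + E[max_{a'} f(S', a')], S' ~ P_h(.|s,a);
   the max is written as the supremum of the range of f(S', .) *)
Definition Tstar (r : nat -> S -> A -> R) (h : nat) (f : S -> A -> R)
  : S -> A -> R :=
  fun s a => r h s a + Rintegral (P h (s, a)) setT (fun s' => sup (range (f s'))).

(* E_pi[ g(S_h, A_h) ] = \int nu(ds) \int pi_1(da|s) (P^pi_{1->h} g)(s,a) *)
Definition Eh (pi : policy) (h : nat) (g : S -> A -> R) : R :=
  Rintegral nu setT (polE (pi 1%N) (Pto pi 1 h g)).

Definition J (H : nat) (r : nat -> S -> A -> R) (pi : policy) : R :=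
  \sum_(1 <= h < H.+1) Eh pi h (r h).

Definition Delta (H : nat) (r : nat -> S -> A -> R) (fh : nat -> S -> A -> R)
  (pi : policy) (h : nat) : S -> A -> R :=
  fun s a => \sum_(h <= h' < H)
     Pto pi h h' (fun s0 a0 => Tstar r h' (fh h'.+1) s0 a0 - fh h' s0 a0) s a.

Definition PopOK (pi : policy) (h : nat) (f : S -> A -> R) : Prop :=
  (forall s', (pi h.+1 s').-integrable setT (fun a => (f s' a)%:E)) /\
  (forall s a, (P h (s, a)).-integrable setT (fun s' => (polE (pi h.+1) f s')%:E)).

Fixpoint ChainOK (pi : policy) (h k : nat) (f : S -> A -> R) : Prop :=
  match k with
  | 0 => True
  | k'.+1 => ChainOK pi h.+1 k' f /\ PopOK pi h (PchainN pi h.+1 k' f)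
  end.

(* every conditional expectation E_pi[g(S_h,A_h) | S_h0 = s] (1 <= h0 <= h)
   and the expectation E_pi[g(S_h,A_h)] are finite (integrals of integrable
   functions) *)
Definition FinExp (pi : policy) (h : nat) (g : S -> A -> R) : Prop :=
  (forall h0, (1 <= h0 <= h)%N ->
     ChainOK pi h0 (h - h0) g /\
     forall s, (pi h0 s).-integrable setT (fun a => (Pto pi h0 h g s a)%:E)) /\
  nu.-integrable setT (fun s => (polE (pi 1%N) (Pto pi 1 h g) s)%:E).

Definition greedy (H : nat) (fh : nat -> S -> A -> R) (pihat : policy) : Prop :=
  forall h, (1 <= h <= H)%N -> forall s, exists a0,
    (forall a, fh h s a <= fh h s a0) /\
    (forall U, measurable U -> pihat h s U = \d_a0 U).

End MDP.

(* Main.v *)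
Require Import Defs.
From HB Require Import structures.
From mathcomp Require Import all_boot all_order all_algebra.
From mathcomp Require Import all_classical all_reals all_analysis.
From mathcomp Require Import lra.
Set Implicit Arguments. Unset Strict Implicit. Unset Printing Implicit Defensive.
Import Order.TTheory GRing.Theory Num.Theory.
Local Open Scope classical_set_scope.
Local Open Scope ring_scope.

Section Basic.
Context {R : realType} {dx dy : measure_display}
        {X : measurableType dx} {Y : measurableType dy}.

Lemma pk_int_cst (k : R.-pker X ~> Y) x (c : R) :
  (k x).-integrable setT (fun _ => c%:E).
Proof.
apply/integrableP; split; first exact: measurable_cst.
rewrite (integral_cst (k x) measurableT (`|c%:E|)%E) prob_kernel mule1.
exact: ltry.
Qed.

Lemma pk_Rint_cst (k : R.-pker X ~> Y) x (c : R) :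
  Rintegral (k x) setT (fun _ => c) = c.
Proof. by rewrite Rintegral_cst // prob_kernel /= mulr1. Qed.

Lemma Rint_sum (mu : {measure set X -> \bar R}) (I : eqType) (l : seq I)
  (F : I -> X -> R) :
  (forall i, i \in l -> mu.-integrable setT (fun x => (F i x)%:E)) ->
  mu.-integrable setT (fun x => (\sum_(i <- l) F i x)%:E) /\
  Rintegral mu setT (fun x => \sum_(i <- l) F i x) =
  \sum_(i <- l) Rintegral mu setT (F i).
Proof.
elim: l => [|i l IH] Hi.
  split.
    apply: (eq_integrable measurableT (cst 0%E)); last exact: integrable0.
    by move=> x _; rewrite big_nil.
  rewrite big_nil; under eq_Rintegral do rewrite big_nil.
  by rewrite Rintegral_cst // mul0r.
have [H1 H2] := IH (fun j jl => Hi j (mem_behead (s:=i :: l) jl)).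
have H0 := Hi i (mem_head i l).
split.
  apply: (eq_integrable measurableT
    ((fun x => (F i x)%:E) \+ (fun x => (\sum_(j <- l) F j x)%:E))%E).
    by move=> x _; rewrite big_cons.
  exact: integrableD.
under eq_Rintegral do rewrite big_cons.
by rewrite RintegralD // big_cons H2.
Qed.

Lemma Rint_add (mu : {measure set X -> \bar R}) (f g : X -> R) :
  mu.-integrable setT (fun x => (f x)%:E) ->
  mu.-integrable setT (fun x => (g x)%:E) ->
  mu.-integrable setT (fun x => (f x + g x)%:E) /\
  Rintegral mu setT (fun x => f x + g x) =
  Rintegral mu setT f + Rintegral mu setT g.
Proof.
move=> If Ig; split; last by rewrite RintegralD.
apply: (eq_integrable measurableT
    ((fun x => (f x)%:E) \+ (fun x => (g x)%:E))%E) => //.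
exact: integrableD.
Qed.

Lemma Rint_sub (mu : {measure set X -> \bar R}) (f g : X -> R) :
  mu.-integrable setT (fun x => (f x)%:E) ->
  mu.-integrable setT (fun x => (g x)%:E) ->
  mu.-integrable setT (fun x => (f x - g x)%:E) /\
  Rintegral mu setT (fun x => f x - g x) =
  Rintegral mu setT f - Rintegral mu setT g.
Proof.
move=> If Ig; split; last by rewrite RintegralB.
apply: (eq_integrable measurableT
    ((fun x => (f x)%:E) \- (fun x => (g x)%:E))%E) => //.
exact: integrableB.
Qed.

Lemma sup_greedy (f : Y -> R) a0 : (forall a, f a <= f a0) ->
  sup (range f) = f a0.
Proof.
move=> Hf; apply/le_anti/andP; split.
  apply: ge_sup; first by exists (f a0), a0.
  by move=> x [a _ <-].
apply: ub_le_sup; last by exists a0.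
by exists (f a0) => x [a _ <-].
Qed.

Lemma polE_dirac (k : R.-pker X ~> Y) x a0 (g : Y -> R) :
  (forall U, measurable U -> k x U = \d_a0 U) -> measurable_fun setT g ->
  Rintegral (k x) setT g = g a0.
Proof.
move=> Hk mg; rewrite /Rintegral (eq_measure_integral (\d_a0)).
  rewrite integral_dirac //=.
    by rewrite indicE mem_set // mul1r.
  exact: (proj2 (measurable_realfun.measurable_EFinP _ _) mg).
by move=> U mU _; exact: Hk.
Qed.

End Basic.

Section MDPlem.
Context (R : realType) (d1 d2 : measure_display)
        (S : measurableType d1) (A : measurableType d2)
        (P : transitions R S A) (nu : probability S R).
Implicit Types (rho : policy R S A) (f g : S -> A -> R).

Lemma polE_cst (k : R.-pker S ~> A) (v : S -> R) s :
  polE k (fun s _ => v s) s = v s.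
Proof. exact: pk_Rint_cst. Qed.

Lemma polE_add (k : R.-pker S ~> A) f1 f2 s :
  (k s).-integrable setT (fun a => (f1 s a)%:E) ->
  (k s).-integrable setT (fun a => (f2 s a)%:E) ->
  polE k (fun s a => f1 s a + f2 s a) s = polE k f1 s + polE k f2 s.
Proof. by move=> I1 I2; rewrite /polE (Rint_add I1 I2).2. Qed.

Lemma polE_sub (k : R.-pker S ~> A) f1 f2 s :
  (k s).-integrable setT (fun a => (f1 s a)%:E) ->
  (k s).-integrable setT (fun a => (f2 s a)%:E) ->
  polE k (fun s a => f1 s a - f2 s a) s = polE k f1 s - polE k f2 s.
Proof. by move=> I1 I2; rewrite /polE (Rint_sub I1 I2).2. Qed.

Lemma PopOK_add rho h f1 f2 : PopOK P rho h f1 -> PopOK P rho h f2 ->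
  PopOK P rho h (fun s a => f1 s a + f2 s a) /\
  forall s a, Pop P rho h (fun s a => f1 s a + f2 s a) s a =
              Pop P rho h f1 s a + Pop P rho h f2 s a.
Proof.
move=> [I1 J1] [I2 J2].
have E : polE (rho h.+1) (fun s a => f1 s a + f2 s a) =
         (fun s => polE (rho h.+1) f1 s + polE (rho h.+1) f2 s).
  by apply: funext => s; rewrite polE_add.
split; first split.
- by move=> s'; exact: (Rint_add (I1 s') (I2 s')).1.
- by move=> s a; rewrite E; exact: (Rint_add (J1 s a) (J2 s a)).1.
- by move=> s a; rewrite /Pop E (Rint_add (J1 s a) (J2 s a)).2.
Qed.

Lemma PopOK_sub rho h f1 f2 : PopOK P rho h f1 -> PopOK P rho h f2 ->
  PopOK P rho h (fun s a => f1 s a - f2 s a) /\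
  forall s a, Pop P rho h (fun s a => f1 s a - f2 s a) s a =
              Pop P rho h f1 s a - Pop P rho h f2 s a.
Proof.
move=> [I1 J1] [I2 J2].
have E : polE (rho h.+1) (fun s a => f1 s a - f2 s a) =
         (fun s => polE (rho h.+1) f1 s - polE (rho h.+1) f2 s).
  by apply: funext => s; rewrite polE_sub.
split; first split.
- by move=> s'; exact: (Rint_sub (I1 s') (I2 s')).1.
- by move=> s a; rewrite E; exact: (Rint_sub (J1 s a) (J2 s a)).1.
- by move=> s a; rewrite /Pop E (Rint_sub (J1 s a) (J2 s a)).2.
Qed.

Lemma Chain_add rho k : forall h f1 f2,
  ChainOK P rho h k f1 -> ChainOK P rho h k f2 ->
  ChainOK P rho h k (fun s a => f1 s a + f2 s a) /\
  PchainN P rho h k (fun s a => f1 s a + f2 s a) =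
  (fun s a => PchainN P rho h k f1 s a + PchainN P rho h k f2 s a).
Proof.
elim: k => [|k IH] h f1 f2 //= [C1 O1] [C2 O2].
have [HC HE] := IH h.+1 f1 f2 C1 C2.
rewrite HE; have [HO Eq] := PopOK_add O1 O2.
split => //; apply: funext => s; apply: funext => a; exact: Eq.
Qed.

Lemma Chain_sub rho k : forall h f1 f2,
  ChainOK P rho h k f1 -> ChainOK P rho h k f2 ->
  ChainOK P rho h k (fun s a => f1 s a - f2 s a) /\
  PchainN P rho h k (fun s a => f1 s a - f2 s a) =
  (fun s a => PchainN P rho h k f1 s a - PchainN P rho h k f2 s a).
Proof.
elim: k => [|k IH] h f1 f2 //= [C1 O1] [C2 O2].
have [HC HE] := IH h.+1 f1 f2 C1 C2.
rewrite HE; have [HO Eq] := PopOK_sub O1 O2.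
split => //; apply: funext => s; apply: funext => a; exact: Eq.
Qed.

Lemma FE_add rho h f1 f2 : (1 <= h)%N ->
  FinExp P nu rho h f1 -> FinExp P nu rho h f2 ->
  FinExp P nu rho h (fun s a => f1 s a + f2 s a) /\
  Eh P nu rho h (fun s a => f1 s a + f2 s a) = Eh P nu rho h f1 + Eh P nu rho h f2.
Proof.
move=> h1 [F1 N1] [F2 N2].
have PE : forall h0, (1 <= h0 <= h)%N ->
  Pto P rho h0 h (fun s a => f1 s a + f2 s a) =
  (fun s a => Pto P rho h0 h f1 s a + Pto P rho h0 h f2 s a).
  by move=> h0 Hh0; exact: (Chain_add (F1 h0 Hh0).1 (F2 h0 Hh0).1).2.
have h11 : (1 <= 1 <= h)%N by rewrite leqnn h1.
have Q : polE (rho 1%N) (Pto P rho 1 h (fun s a => f1 s a + f2 s a)) =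
  (fun s => polE (rho 1%N) (Pto P rho 1 h f1) s + polE (rho 1%N) (Pto P rho 1 h f2) s).
  apply: funext => s; rewrite PE //.
  exact: (polE_add (f1 := Pto P rho 1 h f1) (f2 := Pto P rho 1 h f2)
    ((F1 1%N h11).2 s) ((F2 1%N h11).2 s)).
split; first split.
- move=> h0 Hh0; split; first exact: (Chain_add (F1 h0 Hh0).1 (F2 h0 Hh0).1).1.
  move=> s; rewrite PE //.
  exact: (Rint_add ((F1 h0 Hh0).2 s) ((F2 h0 Hh0).2 s)).1.
- by rewrite Q; exact: (Rint_add N1 N2).1.
- by rewrite /Eh Q (Rint_add N1 N2).2.
Qed.

Lemma FE_sub rho h f1 f2 : (1 <= h)%N ->
  FinExp P nu rho h f1 -> FinExp P nu rho h f2 ->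
  FinExp P nu rho h (fun s a => f1 s a - f2 s a) /\
  Eh P nu rho h (fun s a => f1 s a - f2 s a) = Eh P nu rho h f1 - Eh P nu rho h f2.
Proof.
move=> h1 [F1 N1] [F2 N2].
have PE : forall h0, (1 <= h0 <= h)%N ->
  Pto P rho h0 h (fun s a => f1 s a - f2 s a) =
  (fun s a => Pto P rho h0 h f1 s a - Pto P rho h0 h f2 s a).
  by move=> h0 Hh0; exact: (Chain_sub (F1 h0 Hh0).1 (F2 h0 Hh0).1).2.
have h11 : (1 <= 1 <= h)%N by rewrite leqnn h1.
have Q : polE (rho 1%N) (Pto P rho 1 h (fun s a => f1 s a - f2 s a)) =
  (fun s => polE (rho 1%N) (Pto P rho 1 h f1) s - polE (rho 1%N) (Pto P rho 1 h f2) s).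
  apply: funext => s; rewrite PE //.
  exact: (polE_sub (f1 := Pto P rho 1 h f1) (f2 := Pto P rho 1 h f2)
    ((F1 1%N h11).2 s) ((F2 1%N h11).2 s)).
split; first split.
- move=> h0 Hh0; split; first exact: (Chain_sub (F1 h0 Hh0).1 (F2 h0 Hh0).1).1.
  move=> s; rewrite PE //.
  exact: (Rint_sub ((F1 h0 Hh0).2 s) ((F2 h0 Hh0).2 s)).1.
- by rewrite Q; exact: (Rint_sub N1 N2).1.
- by rewrite /Eh Q (Rint_sub N1 N2).2.
Qed.

End MDPlem.

Section MDPlem2.
Context (R : realType) (d1 d2 : measure_display)
        (S : measurableType d1) (A : measurableType d2)
        (P : transitions R S A) (nu : probability S R).
Implicit Types (rho : policy R S A) (f g : S -> A -> R).

Lemma Pchain_S rho k : forall h f,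
  PchainN P rho h k.+1 f = PchainN P rho h k (Pop P rho (h + k) f).
Proof.
elim: k => [|k IH] h f; first by rewrite addn0.
rewrite addnS -addSn.
change (Pop P rho h (PchainN P rho h.+1 k.+1 f) =
  Pop P rho h (PchainN P rho h.+1 k (Pop P rho (h.+1 + k) f))).
by rewrite IH.
Qed.

Lemma ChainOK_S rho k : forall h f,
  ChainOK P rho h k.+1 f <->
  ChainOK P rho h k (Pop P rho (h + k) f) /\ PopOK P rho (h + k) f.
Proof.
elim: k => [|k IH] h f; first by rewrite addn0 /=; tauto.
change ((ChainOK P rho h.+1 k.+1 f /\ PopOK P rho h (PchainN P rho h.+1 k.+1 f)) <->
  ((ChainOK P rho h.+1 k (Pop P rho (h + k.+1) f) /\
    PopOK P rho h (PchainN P rho h.+1 k (Pop P rho (h + k.+1) f))) /\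
   PopOK P rho (h + k.+1) f)).
have := IH h.+1 f; rewrite Pchain_S addnS -addSn; tauto.
Qed.

Lemma Pto_id rho h f : Pto P rho h h f = f.
Proof. by rewrite /Pto subnn. Qed.

Lemma Pto_last rho h0 h f : (h0 <= h)%N ->
  Pto P rho h0 h.+1 f = Pto P rho h0 h (Pop P rho h f).
Proof. by move=> hh; rewrite /Pto subSn // Pchain_S subnKC. Qed.

Lemma ChainOK_last rho h0 h f : (h0 <= h)%N ->
  ChainOK P rho h0 (h.+1 - h0) f <->
  ChainOK P rho h0 (h - h0) (Pop P rho h f) /\ PopOK P rho h f.
Proof. by move=> hh; rewrite subSn // ChainOK_S subnKC. Qed.

Lemma Pto_first rho h h' f : (h < h')%N ->
  Pto P rho h h' f = Pop P rho h (Pto P rho h.+1 h' f).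
Proof. by move=> hh; rewrite /Pto -(subnSK hh). Qed.

Lemma ChainOK_first rho h h' f : (h < h')%N ->
  ChainOK P rho h (h' - h) f ->
  PopOK P rho h (Pto P rho h.+1 h' f).
Proof. by move=> hh; rewrite -(subnSK hh) => -[]. Qed.

Lemma FE_tower rho h f : (1 <= h)%N ->
  FinExp P nu rho h.+1 f ->
  FinExp P nu rho h (Pop P rho h f) /\
  Eh P nu rho h (Pop P rho h f) = Eh P nu rho h.+1 f.
Proof.
move=> h1 [F N].
have E1 : Pto P rho 1 h (Pop P rho h f) = Pto P rho 1 h.+1 f by rewrite Pto_last.
split; last by rewrite /Eh E1.
split; last by rewrite E1.
move=> h0 /andP[h01 h0h].
have Hh0 : (1 <= h0 <= h.+1)%N by rewrite h01 (leq_trans h0h).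
have [C I] := F h0 Hh0.
split; first exact: (proj1 (ChainOK_last _ _ h0h) C).1.
by rewrite -Pto_last.
Qed.

Lemma FE_polE rho h phi : (1 <= h)%N ->
  FinExp P nu rho h phi ->
  FinExp P nu rho h (fun s _ => polE (rho h) phi s) /\
  Eh P nu rho h (fun s _ => polE (rho h) phi s) = Eh P nu rho h phi.
Proof.
case: h => [//|m] _ [F N].
set c := (fun s (_ : A) => polE (rho m.+1) phi s).
have Iphi : forall s, (rho m.+1 s).-integrable setT (fun a => (phi s a)%:E).
  move=> s; have := (F m.+1 (leqnn _)).2 s; by rewrite /= Pto_id.
have Pc : Pop P rho m c = Pop P rho m phi.
  apply: funext => s; apply: funext => a; rewrite /Pop.
  by apply: eq_Rintegral => s' _; exact: (polE_cst (rho m.+1) (polE (rho m.+1) phi) s').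
have POc : PopOK P rho m c <-> PopOK P rho m phi.
  rewrite /PopOK; split=> -[_ J]; split => //.
  - move=> s a; have := J s a.
    suff -> : polE (rho m.+1) c = polE (rho m.+1) phi by [].
    by apply: funext => s'; exact: (polE_cst (rho m.+1) (polE (rho m.+1) phi) s').
  - by move=> s'; exact: pk_int_cst.
  - move=> s a; have := J s a.
    suff -> : polE (rho m.+1) c = polE (rho m.+1) phi by [].
    by apply: funext => s'; exact: (polE_cst (rho m.+1) (polE (rho m.+1) phi) s').
have PL : polE (rho 1%N) (Pto P rho 1 m.+1 c) = polE (rho 1%N) (Pto P rho 1 m.+1 phi).
  destruct m as [|m].
    by apply: funext => s; rewrite !Pto_id; exact: (polE_cst (rho 1%N) (polE (rho 1%N) phi) s).
  have m1 : (1 <= m.+1)%N by [].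
  by rewrite (@Pto_last rho 1 m.+1 c m1) (@Pto_last rho 1 m.+1 phi m1) Pc.
split; last by rewrite /Eh PL.
split; last by rewrite PL.
move=> h0 /andP[h01]; rewrite leq_eqVlt => /orP[/eqP ->|h0m].
  split; first by rewrite subnn.
  by move=> s; rewrite Pto_id; exact: pk_int_cst.
rewrite ltnS in h0m.
have [C I] := F h0 (introT andP (conj h01 (leqW h0m))).
split.
  apply/(@ChainOK_last rho h0 m c h0m); rewrite Pc; split.
    exact: (proj1 (@ChainOK_last rho h0 m phi h0m) C).1.
  by apply/POc; exact: (proj1 (@ChainOK_last rho h0 m phi h0m) C).2.
by move=> s; rewrite (@Pto_last rho h0 m c h0m) Pc -(@Pto_last rho h0 m phi h0m).
Qed.

Lemma PchainN_ge0 rho k : forall h f, (forall s a, 0 <= f s a) ->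
  forall s a, 0 <= PchainN P rho h k f s a.
Proof.
elim: k => [|k IH] h f f0 s a //=.
apply: Rintegral_ge0 => s' _; apply: Rintegral_ge0 => a' _.
exact: IH.
Qed.

Lemma Eh_ge0 rho h f : (forall s a, 0 <= f s a) -> 0 <= Eh P nu rho h f.
Proof.
move=> f0; apply: Rintegral_ge0 => s _; apply: Rintegral_ge0 => a _.
exact: PchainN_ge0.
Qed.

Lemma Pop_sum rho h (l : seq nat) (F : nat -> S -> A -> R) :
  (forall i, i \in l -> PopOK P rho h (F i)) ->
  forall s a, Pop P rho h (fun s a => \sum_(i <- l) F i s a) s a =
              \sum_(i <- l) Pop P rho h (F i) s a.
Proof.
move=> HF s a.
have Ep : polE (rho h.+1) (fun s a => \sum_(i <- l) F i s a) =
          (fun s' => \sum_(i <- l) polE (rho h.+1) (F i) s').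
  apply: funext => s'; rewrite /polE.
  exact: (Rint_sum (fun i il => (HF i il).1 s')).2.
rewrite /Pop Ep.
exact: (Rint_sum (fun i il => (HF i il).2 s a)).2.
Qed.

End MDPlem2.

Lemma telesc (R : realType) (n : nat) (G F M Rw : nat -> R) : (1 <= n)%N ->
  (forall h, (1 <= h < n)%N -> Rw h = G h + F h - M h) -> Rw n = F n ->
  \sum_(1 <= h < n.+1) Rw h =
  \sum_(1 <= h < n) G h + F 1%N + \sum_(1 <= h < n) (F h.+1 - M h).
Proof.
move=> n1 HR Hn.
have TF : \sum_(1 <= h < n) F h + F n = F 1%N + \sum_(1 <= h < n) F h.+1.
  by rewrite -big_nat_recr // big_nat_recl.
rewrite big_nat_recr //= Hn (eq_big_nat _ _ HR) sumrB big_split /= sumrB.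
lra.
Qed.

Definition gB (R : realType) d1 d2 (S : measurableType d1) (A : measurableType d2)
  (P : transitions R S A) (r fh : nat -> S -> A -> R) (h : nat) :=
  fun s a => Tstar P r h (fh h.+1) s a - fh h s a.

Definition UB (R : realType) d1 d2 (S : measurableType d1) (A : measurableType d2)
  (P : transitions R S A) (H : nat) (r fh : nat -> S -> A -> R)
  (rho pi : policy R S A) (h : nat) :=
  fun s (_ : A) => polE (rho h) (Delta P H r fh pi h) s.

Theorem lemma2 (R : realType) (d1 d2 : measure_display)
  (S : measurableType d1) (A : measurableType d2)
  (H : nat) (P : transitions R S A) (nu : probability S R)
  (r : nat -> S -> A -> R) (fh : nat -> S -> A -> R)
  (pihat pi : policy R S A) :
  (2 <= H)%N ->
  fh H = r H ->
  greedy H fh pihat ->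
  (* all expectations are finite: *)
  (forall h, (1 <= h < H)%N -> forall s a,
     (P h (s, a)).-integrable setT (fun s' => (sup (range (fh h.+1 s')))%:E)) ->
  (forall rho, rho = pi \/ rho = pihat -> forall h, (1 <= h <= H)%N ->
     FinExp P nu rho h (r h) /\ FinExp P nu rho h (fh h)) ->
  (forall rho, rho = pi \/ rho = pihat -> forall h, (1 <= h < H)%N ->
     FinExp P nu rho h (Tstar P r h (fh h.+1))) ->
  (forall h h', (1 <= h <= h')%N -> (h' < H)%N ->
     ChainOK P pi h (h' - h)
       (fun s a => Tstar P r h' (fh h'.+1) s a - fh h' s a)) ->
  (forall h, (1 <= h < H)%N -> forall s,
     (pi h s).-integrable setT (fun a => (Delta P H r fh pi h s a)%:E) /\
     (pihat h s).-integrable setT (fun a => (Delta P H r fh pi h s a)%:E)) ->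
  (forall h, (1 <= h < H)%N ->
     FinExp P nu pihat h (fun s _ =>
       polE (pi h) (Delta P H r fh pi h) s - polE (pihat h) (Delta P H r fh pi h) s)) ->
  J P nu H r pi - J P nu H r pihat <=
  \sum_(1 <= h < H)
     Eh P nu pihat h (fun s _ =>
       polE (pi h) (Delta P H r fh pi h) s - polE (pihat h) (Delta P H r fh pi h) s).
Proof.
move=> H2 HfH Hg Hsup Hfin HfinT Hch Hint HfinD.
have H1 : (1 <= H)%N by apply: ltnW.
have Opi : pi = pi \/ pi = pihat by left.
have Ohat : pihat = pi \/ pihat = pihat by right.
have lt_le : forall h, (1 <= h < H)%N -> (1 <= h <= H)%N.
  by move=> h /andP[a b]; rewrite a ltnW.
have lt_le1 : forall h, (1 <= h < H)%N -> (1 <= h.+1 <= H)%N.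
  by move=> h /andP[a b]; rewrite b.
have hh_ : forall h, (1 <= h)%N -> (1 <= h <= h)%N by move=> h ->; rewrite leqnn.
have Fr : forall rho, rho = pi \/ rho = pihat -> forall h, (1 <= h <= H)%N ->
  FinExp P nu rho h (r h) := fun rho o h hh => (Hfin rho o h hh).1.
have Ff : forall rho, rho = pi \/ rho = pihat -> forall h, (1 <= h <= H)%N ->
  FinExp P nu rho h (fh h) := fun rho o h hh => (Hfin rho o h hh).2.
have Fg : forall rho, rho = pi \/ rho = pihat -> forall h, (1 <= h < H)%N ->
  FinExp P nu rho h (gB P r fh h) /\
  Eh P nu rho h (gB P r fh h) =
  Eh P nu rho h (Tstar P r h (fh h.+1)) - Eh P nu rho h (fh h).
  move=> rho o h hh; have h1 : (1 <= h)%N by case/andP: hh.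
  exact: (FE_sub h1 (HfinT rho o h hh) (Ff rho o h (lt_le h hh))).
have If : forall rho, rho = pi \/ rho = pihat -> forall h, (1 <= h <= H)%N ->
  forall s, (rho h s).-integrable setT (fun a => (fh h s a)%:E).
  move=> rho o h hh s; have h1 : (1 <= h)%N by case/andP: hh.
  by have := ((Ff rho o h hh).1 h (hh_ h h1)).2 s; rewrite Pto_id.
have meas : forall h, (1 <= h <= H)%N -> forall s, measurable_fun setT (fh h s).
  move=> h hh s; have := If pihat Ohat h hh s.
  by move=> /measurable_int /measurable_realfun.measurable_EFinP.
have greedyE : forall h, (1 <= h <= H)%N -> forall s,
  (forall a, fh h s a <= polE (pihat h) (fh h) s) /\
  polE (pihat h) (fh h) s = sup (range (fh h s)).
  move=> h hh s; have [a0 [Ha0 Hd]] := Hg h hh s.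
  have -> : polE (pihat h) (fh h) s = fh h s a0.
    exact: (polE_dirac Hd (meas h hh s)).
  by rewrite (sup_greedy Ha0).
have polE_le : forall h, (1 <= h <= H)%N -> forall s,
  polE (pi h) (fh h) s <= polE (pihat h) (fh h) s.
  move=> h hh s.
  rewrite -[X in _ <= X](pk_Rint_cst (pi h) s).
  apply: le_Rintegral => //; first exact: If.
    exact: pk_int_cst.
  by move=> a _; exact: (greedyE h hh s).1.
have TstarE : forall h, (1 <= h < H)%N ->
  Tstar P r h (fh h.+1) = fun s a => r h s a + Pop P pihat h (fh h.+1) s a.
  move=> h hh; apply: funext => s; apply: funext => a.
  rewrite /Tstar /Pop; congr (_ + _); apply: eq_Rintegral => s' _.
  by rewrite -(greedyE h.+1 (lt_le1 h hh) s').2.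
have FM : forall rho, rho = pi \/ rho = pihat -> forall h, (1 <= h < H)%N ->
  FinExp P nu rho h (Pop P pihat h (fh h.+1)) /\
  Eh P nu rho h (Tstar P r h (fh h.+1)) =
  Eh P nu rho h (r h) + Eh P nu rho h (Pop P pihat h (fh h.+1)).
  move=> rho o h hh; have h1 : (1 <= h)%N by case/andP: hh.
  have [F1 _] := FE_sub h1 (HfinT rho o h hh) (Fr rho o h (lt_le h hh)).
  have eqM : (fun s a => Tstar P r h (fh h.+1) s a - r h s a) =
             Pop P pihat h (fh h.+1).
    rewrite TstarE //; apply: funext => s; apply: funext => a /=.
    by rewrite addrC addKr.
  rewrite eqM in F1; split => //.
  rewrite {1}TstarE //.
  exact: (FE_add h1 (Fr rho o h (lt_le h hh)) F1).2.
have PopOKf : forall rho, rho = pi \/ rho = pihat -> forall h, (1 <= h < H)%N ->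
  PopOK P rho h (fh h.+1).
  move=> rho o h hh; have h1 : (1 <= h)%N by case/andP: hh.
  have [C _] := (Ff rho o h.+1 (lt_le1 h hh)).1 1%N isT.
  exact: (proj1 (ChainOK_last P rho (fh h.+1) h1) C).2.
have Rw_eq : forall rho, rho = pi \/ rho = pihat -> forall h, (1 <= h < H)%N ->
  Eh P nu rho h (r h) = Eh P nu rho h (gB P r fh h) + Eh P nu rho h (fh h)
    - Eh P nu rho h (Pop P pihat h (fh h.+1)).
  move=> rho o h hh; rewrite (Fg rho o h hh).2 (FM rho o h hh).2; lra.
have Jeq : forall rho, rho = pi \/ rho = pihat ->
  J P nu H r rho = \sum_(1 <= h < H) Eh P nu rho h (gB P r fh h) +
     Eh P nu rho 1 (fh 1%N) +
     \sum_(1 <= h < H) (Eh P nu rho h.+1 (fh h.+1) -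
                        Eh P nu rho h (Pop P pihat h (fh h.+1))).
  move=> rho o; rewrite /J.
  apply: (telesc (G := fun h => Eh P nu rho h (gB P r fh h))
                 (F := fun h => Eh P nu rho h (fh h))
                 (M := fun h => Eh P nu rho h (Pop P pihat h (fh h.+1)))
                 (Rw := fun h => Eh P nu rho h (r h))) => //.
    exact: Rw_eq.
  by rewrite HfH.
have Jhat : J P nu H r pihat = \sum_(1 <= h < H) Eh P nu pihat h (gB P r fh h) +
     Eh P nu pihat 1 (fh 1%N).
  rewrite Jeq //.
  suff -> : \sum_(1 <= h < H) (Eh P nu pihat h.+1 (fh h.+1) -
                        Eh P nu pihat h (Pop P pihat h (fh h.+1))) = 0 by rewrite addr0.
  rewrite big_nat big1 // => h hh.
  have h1 : (1 <= h)%N by case/andP: hh.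
  by rewrite (FE_tower h1 (Ff pihat Ohat h.+1 (lt_le1 h hh))).2 subrr.
have Jpi : J P nu H r pi <= \sum_(1 <= h < H) Eh P nu pi h (gB P r fh h) +
     Eh P nu pi 1 (fh 1%N).
  rewrite Jeq // -[X in _ <= X]addr0 lerD2l.
  rewrite big_nat; apply: sumr_le0 => h hh.
  have h1 : (1 <= h)%N by case/andP: hh.
  have [FT' ET'] := FE_tower h1 (Ff pi Opi h.+1 (lt_le1 h hh)).
  rewrite -ET' subr_le0 -subr_ge0.
  rewrite -(FE_sub h1 (FM pi Opi h hh).1 FT').2.
  apply: Eh_ge0 => s a; rewrite subr_ge0.
  apply: le_Rintegral => //.
  - exact: (PopOKf pi Opi h hh).2.
  - exact: (PopOKf pihat Ohat h hh).2.
  - by move=> s' _; exact: polE_le (lt_le1 h hh) s'.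
have F1le : Eh P nu pi 1 (fh 1%N) <= Eh P nu pihat 1 (fh 1%N).
  have H11 : (1 <= 1 <= H)%N by rewrite leqnn H1.
  have N1 := (Ff pi Opi 1%N H11).2; have N2 := (Ff pihat Ohat 1%N H11).2.
  rewrite /Eh !Pto_id; rewrite !Pto_id in N1 N2.
  apply: le_Rintegral => // s _; exact: polE_le.
have DeltaE : forall h, Delta P H r fh pi h =
  fun s a => \sum_(h <= h' < H) Pto P pi h h' (gB P r fh h') s a by [].
have Drec : forall h, (1 <= h < H)%N -> Delta P H r fh pi h =
  fun s a => gB P r fh h s a + Pop P pihat h (UB P H r fh pi pi h.+1) s a.
  move=> h hh; have hH : (h < H)%N by case/andP: hh.
  apply: funext => s; apply: funext => a.
  rewrite DeltaE big_ltn // Pto_id; congr (_ + _).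
  rewrite (eq_big_nat _ _ (F2 := fun h' => Pop P pi h (Pto P pi h.+1 h' (gB P r fh h')) s a)); last first.
    by move=> h' /andP[hh' _]; rewrite (Pto_first P pi _ hh').
  rewrite -(Pop_sum (F := fun h' => Pto P pi h.+1 h' (gB P r fh h'))); last first.
    move=> i; rewrite mem_index_iota => /andP[hi iH].
    apply: (ChainOK_first hi); apply: Hch => //.
    by rewrite (ltnW hi) andbT; case/andP: hh.
  rewrite /Pop; apply: eq_Rintegral => s' _.
  symmetry; exact: (polE_cst (pihat h.+1) (polE (pi h.+1) (Delta P H r fh pi h.+1)) s').
have D0 : Delta P H r fh pi H = fun _ _ => 0.
  by apply: funext => s; apply: funext => a; rewrite DeltaE big_geq.
have UH : UB P H r fh pi pi H = fun s a => fh H s a - fh H s a.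
  apply: funext => s; apply: funext => a; rewrite subrr /UB D0.
  exact: (polE_cst (pi H) (fun _ => 0) s).
have HHH : (1 <= H <= H)%N by rewrite leqnn H1.
have FEU : forall n h, (h + n)%N = H -> (1 <= h)%N ->
    FinExp P nu pihat h (UB P H r fh pi pi h).
  elim => [|n IH] h hn h1.
    rewrite addn0 in hn; subst h; rewrite UH.
    exact: (FE_sub H1 (Ff pihat Ohat H HHH) (Ff pihat Ohat H HHH)).1.
  have hh : (1 <= h < H)%N by rewrite h1 -hn addnS ltnS leq_addr.
  have hn' : (h.+1 + n)%N = H by rewrite addSnnS.
  have IH' := IH h.+1 hn' isT.
  have FT1 := (FE_tower h1 IH').1.
  have FD := (FE_add h1 (Fg pihat Ohat h hh).1 FT1).1.
  rewrite -(Drec h hh) in FD.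
  have FV := (FE_polE h1 FD).1.
  have FDh := HfinD h hh.
  have := (FE_add h1 FDh FV).1.
  suff -> : (fun s a => (polE (pi h) (Delta P H r fh pi h) s -
                        polE (pihat h) (Delta P H r fh pi h) s) +
                        polE (pihat h) (Delta P H r fh pi h) s) =
            UB P H r fh pi pi h by [].
  by apply: funext => s; apply: funext => a; rewrite subrK.
have FEU' : forall h, (1 <= h <= H)%N -> FinExp P nu pihat h (UB P H r fh pi pi h).
  move=> h /andP[h1 hH]; apply: (FEU (H - h)%N) => //; exact: subnKC.
have FDelta : forall h, (1 <= h < H)%N ->
  FinExp P nu pihat h (Delta P H r fh pi h) /\
  Eh P nu pihat h (Delta P H r fh pi h) =
  Eh P nu pihat h (gB P r fh h) + Eh P nu pihat h.+1 (UB P H r fh pi pi h.+1).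
  move=> h hh; have h1 : (1 <= h)%N by case/andP: hh.
  have FT := FE_tower h1 (FEU' h.+1 (lt_le1 h hh)).
  have FA := FE_add h1 (Fg pihat Ohat h hh).1 FT.1.
  rewrite (Drec h hh); split; first exact: FA.1.
  by rewrite FA.2 FT.2.
have ED : forall h, (1 <= h < H)%N ->
  Eh P nu pihat h (fun s _ =>
       polE (pi h) (Delta P H r fh pi h) s - polE (pihat h) (Delta P H r fh pi h) s) =
  Eh P nu pihat h (UB P H r fh pi pi h) -
  (Eh P nu pihat h (gB P r fh h) + Eh P nu pihat h.+1 (UB P H r fh pi pi h.+1)).
  move=> h hh; have h1 : (1 <= h)%N by case/andP: hh.
  have FV := FE_polE h1 (FDelta h hh).1.
  rewrite -(FDelta h hh).2 -FV.2.
  exact: (FE_sub h1 (FEU' h (lt_le h hh)) FV.1).2.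
have XH : Eh P nu pihat H (UB P H r fh pi pi H) = 0.
  rewrite UH (FE_sub H1 (Ff pihat Ohat H HHH) (Ff pihat Ohat H HHH)).2.
  exact: subrr.
have X1 : Eh P nu pihat 1 (UB P H r fh pi pi 1) =
  \sum_(1 <= h < H) Eh P nu pi h (gB P r fh h).
  rewrite /Eh Pto_id.
  have e1 : polE (pihat 1%N) (UB P H r fh pi pi 1) =
    fun s => \sum_(1 <= h < H) polE (pi 1%N) (Pto P pi 1 h (gB P r fh h)) s.
    apply: funext => s.
    transitivity (polE (pi 1%N) (Delta P H r fh pi 1) s).
      exact: (polE_cst (pihat 1%N) (polE (pi 1%N) (Delta P H r fh pi 1)) s).
    have HI : forall i, i \in index_iota 1 H ->
      (pi 1%N s).-integrable setT (fun a => (Pto P pi 1 i (gB P r fh i) s a)%:E).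
      move=> i; rewrite mem_index_iota => hi.
      have i1 : (1 <= 1 <= i)%N by rewrite leqnn; case/andP: hi.
      exact: (((Fg pi Opi i hi).1.1 1%N i1).2 s).
    exact: (Rint_sum HI).2.
  rewrite e1.
  have HN : forall i, i \in index_iota 1 H ->
    nu.-integrable setT (fun s => (polE (pi 1%N) (Pto P pi 1 i (gB P r fh i)) s)%:E).
    move=> i; rewrite mem_index_iota => hi.
    exact: (Fg pi Opi i hi).1.2.
  exact: (Rint_sum HN).2.
rewrite (eq_big_nat _ _ ED).
rewrite sumrB big_split /=.
have TS : \sum_(1 <= h < H) (Eh P nu pihat h (UB P H r fh pi pi h) -
                              Eh P nu pihat h.+1 (UB P H r fh pi pi h.+1)) =
          Eh P nu pihat 1 (UB P H r fh pi pi 1) - Eh P nu pihat H (UB P H r fh pi pi H).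
  have T := @telescope_sumr _ 1 H (fun h => Eh P nu pihat h (UB P H r fh pi pi h)) H1.
  rewrite -[RHS]opprB -T -sumrN.
  by apply: eq_bigr => h _; rewrite opprB.
rewrite sumrB in TS.
rewrite X1 in TS.
rewrite opprD addrA addrAC TS Jhat XH subr0.
have J2 := le_trans Jpi (lerD (lexx _) F1le).
move: J2.
move: (J P nu H r pi) (\sum_(1 <= h < H) Eh P nu pi h (gB P r fh h))
  (\sum_(1 <= h < H) Eh P nu pihat h (gB P r fh h)) (Eh P nu pihat 1 (fh 1%N)).
move=> j a b c hj; clear -hj; lra.
Qed.
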